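(* Let $p_1,\dots,p_n\ge0$ and unit vectors $\vec a_1,\dots,\vec a_n\in\mathbb{R}^3$ with $\sum_ip_i=2$, $\sum_ip_i\vec a_i=\vec0$, and suppose all $\vec a_i$ lie in a common plane through the origin (this is automatic when $n=3$). Let $f(\vec x)=\sum_ip_i\Theta(\vec x\cdot\vec a_i)$. Choose coordinates with the $z$-axis orthogonal to that plane. Then there is a rotation $R$ about the $z$-axis by an angle in $[0,\pi/2]$ such that $f(R\vec v_{s_xs_ys_z})\le1$ for all $(s_x,s_y,s_z)\in\{\pm1\}^3$.
   Context: $\Theta(x)=x$ for $x\ge0$ and $0$ for $x<0$; $\vec v_{s_xs_ys_z}=(s_x,s_y,s_z)^T$. *)

(* Defs.v *)
From Stdlib Require Import Reals Lra List.
Open Scope R_scope.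

Definition vec3 := (R * R * R)%type.
Definition vx (v : vec3) : R := fst (fst v).
Definition vy (v : vec3) : R := snd (fst v).
Definition vz (v : vec3) : R := snd v.

Definition dot3 (u v : vec3) : R := vx u * vx v + vy u * vy v + vz u * vz v.

Definition Theta (x : R) : R := if Rle_dec 0 x then x else 0.

Definition fsum (n : nat) (F : nat -> R) : R :=
  fold_right Rplus 0 (map F (seq 0 n)).

Definition fTheta (n : nat) (p : nat -> R) (a : nat -> vec3) (x : vec3) : R :=
  fsum n (fun i => p i * Theta (dot3 x (a i))).

Definition rotz (t : R) (v : vec3) : vec3 :=
  (cos t * vx v - sin t * vy v, sin t * vx v + cos t * vy v, vz v).

Definition sgn (b : bool) : R := if b then 1 else -1.

Definition vs (sx sy sz : bool) : vec3 := (sgn sx, sgn sy, sgn sz).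

(* Main.v *)
Require Import Defs.
From Stdlib Require Import Reals.
From Stdlib Require Import Ranalysis Lra Lia List.
Open Scope R_scope.

Lemma lsum_plus (l : list nat) F G :
  fold_right Rplus 0 (map (fun i => F i + G i) l) =
  fold_right Rplus 0 (map F l) + fold_right Rplus 0 (map G l).
Proof. induction l; simpl; lra. Qed.

Lemma lsum_scal (l : list nat) c F :
  fold_right Rplus 0 (map (fun i => c * F i) l) = c * fold_right Rplus 0 (map F l).
Proof. induction l; simpl; lra. Qed.

Lemma lsum_ext (l : list nat) F G :
  (forall i, In i l -> F i = G i) ->
  fold_right Rplus 0 (map F l) = fold_right Rplus 0 (map G l).
Proof. induction l; simpl; intros H; auto. rewrite H, IHl; auto. Qed.

Lemma lsum_le (l : list nat) F G :
  (forall i, In i l -> F i <= G i) ->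
  fold_right Rplus 0 (map F l) <= fold_right Rplus 0 (map G l).
Proof. induction l; simpl; intros H; try lra.
  assert (F a <= G a) by auto. assert (fold_right Rplus 0 (map F l) <= fold_right Rplus 0 (map G l)) by auto. lra. Qed.

Lemma lsum_cont (l : list nat) (G : nat -> R -> R) :
  (forall i, continuity (G i)) ->
  continuity (fun t => fold_right Rplus 0 (map (fun i => G i t) l)).
Proof. intros H; induction l; simpl.
  - apply continuity_const. intros x y; reflexivity.
  - apply (continuity_plus (G a) (fun t => fold_right Rplus 0 (map (fun i => G i t) l))); auto.
Qed.

Lemma inseq n i : In i (seq 0 n) -> (i < n)%nat.
Proof. intros H. apply in_seq in H. lia. Qed.

Definition U (a : nat -> vec3) t i :=
  (cos t - sin t) * vx (a i) + (sin t + cos t) * vy (a i).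
Definition W (a : nat -> vec3) t i :=
  (cos t + sin t) * vx (a i) + (sin t - cos t) * vy (a i).

Lemma fTheta_half n p a x :
  fsum n (fun i => p i * vx (a i)) = 0 ->
  fsum n (fun i => p i * vy (a i)) = 0 ->
  fsum n (fun i => p i * vz (a i)) = 0 ->
  fTheta n p a x = / 2 * fsum n (fun i => p i * Rabs (dot3 x (a i))).
Proof.
  intros Hx Hy Hz. unfold fTheta, fsum in *.
  assert (E : fold_right Rplus 0 (map (fun i => p i * Theta (dot3 x (a i))) (seq 0 n)) =
    fold_right Rplus 0 (map (fun i => / 2 * (p i * Rabs (dot3 x (a i))) +
      (/2 * vx x * (p i * vx (a i)) + (/2 * vy x * (p i * vy (a i)) + /2 * vz x * (p i * vz (a i))))) (seq 0 n))).
  { apply lsum_ext. intros i _. unfold Theta, dot3.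
    destruct (Rle_dec 0 _) as [h|h].
    - rewrite Rabs_right by lra. lra.
    - rewrite Rabs_left by lra. lra. }
  rewrite E, !lsum_plus, !lsum_scal, Hx, Hy, Hz. ring.
Qed.

Lemma UW_bound a t i : vz (a i) = 0 -> dot3 (a i) (a i) = 1 ->
  Rabs (U a t i) + Rabs (W a t i) <= 2.
Proof.
  intros Hz Hn. unfold dot3 in Hn. rewrite Hz in Hn.
  assert (S : U a t i ^ 2 + W a t i ^ 2 = 2).
  { assert (E : U a t i ^ 2 + W a t i ^ 2 = 2 * ((sin t * sin t + cos t * cos t) * (vx (a i) * vx (a i) + vy (a i) * vy (a i)))) by (unfold U, W; ring).
    pose proof (sin2_cos2 t) as H. unfold Rsqr in H. rewrite E, H. lra. }
  pose proof (Rabs_pos (U a t i)). pose proof (Rabs_pos (W a t i)).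
  assert (Rabs (U a t i) * Rabs (U a t i) = U a t i ^ 2) by (rewrite <- Rabs_mult, Rabs_pos_eq; [ring| nra]).
  assert (Rabs (W a t i) * Rabs (W a t i) = W a t i ^ 2) by (rewrite <- Rabs_mult, Rabs_pos_eq; [ring| nra]).
  set (x := Rabs (U a t i)) in *. set (y := Rabs (W a t i)) in *.
  assert (x * x + y * y = 2) by lra.
  assert ((x + y) * (x + y) <= 4) by (pose proof (Rle_0_sqr (x - y)); unfold Rsqr in *; nra).
  destruct (Rle_dec (x + y) 2) as [h|h]; [exact h|]. nra.
Qed.

Theorem mainTheorem9 (n : nat) (p : nat -> R) (a : nat -> vec3) :
  (forall i, (i < n)%nat -> 0 <= p i) ->
  (forall i, (i < n)%nat -> dot3 (a i) (a i) = 1) ->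
  fsum n p = 2 ->
  fsum n (fun i => p i * vx (a i)) = 0 ->
  fsum n (fun i => p i * vy (a i)) = 0 ->
  fsum n (fun i => p i * vz (a i)) = 0 ->
  (* coordinates chosen so that the common plane of the a_i is z = 0 *)
  (forall i, (i < n)%nat -> vz (a i) = 0) ->
  exists t : R, 0 <= t <= PI / 2 /\
    forall sx sy sz : bool, fTheta n p a (rotz t (vs sx sy sz)) <= 1.
Proof.
  intros Hp Hn Hs Hx Hy Hz Hpl.
  set (D := fun t => fsum n (fun i => p i * Rabs (U a t i)) - fsum n (fun i => p i * Rabs (W a t i))).
  assert (Dc : continuity D).
  { unfold D, fsum. apply continuity_minus.
    - apply (lsum_cont _ (fun i t => p i * Rabs (U a t i))). intros i. unfold U. reg.
    - apply (lsum_cont _ (fun i t => p i * Rabs (W a t i))). intros i. unfold W. reg. }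
  assert (DE : D (PI / 2) = - D 0).
  { unfold D, U, W. rewrite cos_PI2, sin_PI2, cos_0, sin_0.
    assert (forall F G : nat -> R, (forall i, F i = G i) -> fsum n F = fsum n G) as ext
      by (intros F G H; apply lsum_ext; auto).
    rewrite (ext (fun i => p i * Rabs ((0 - 1) * vx (a i) + (1 + 0) * vy (a i)))
                 (fun i => p i * Rabs ((1 - 0) * vx (a i) + (0 + 1) * vy (a i) - 2 * vx (a i))))
      by (intros; f_equal; f_equal; ring).
    rewrite (ext (fun i => p i * Rabs ((0 + 1) * vx (a i) + (1 - 0) * vy (a i)))
                 (fun i => p i * Rabs ((1 - 0) * vx (a i) + (0 + 1) * vy (a i))))
      by (intros; f_equal; f_equal; ring).
    rewrite (ext (fun i => p i * Rabs ((1 - 0) * vx (a i) + (0 + 1) * vy (a i) - 2 * vx (a i)))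
                 (fun i => p i * Rabs ((1 + 0) * vx (a i) + (0 - 1) * vy (a i))))
      by (intros; f_equal; rewrite <- Rabs_Ropp; f_equal; ring).
    ring. }
  assert (Hpi : 0 <= PI / 2) by (pose proof PI_RGT_0; lra).
  destruct (IVT_cor D 0 (PI/2) Dc Hpi) as [t [Ht Dt]].
  { rewrite DE. nra. }
  exists t. split; [exact Ht|].
  assert (Hsum : fsum n (fun i => p i * Rabs (U a t i)) + fsum n (fun i => p i * Rabs (W a t i)) <= 4).
  { unfold fsum. rewrite <- lsum_plus.
    replace 4 with (2 * fold_right Rplus 0 (map p (seq 0 n))) by (unfold fsum in Hs; lra).
    rewrite <- lsum_scal. apply lsum_le. intros i Hi. apply inseq in Hi.
    pose proof (UW_bound a t i (Hpl i Hi) (Hn i Hi)). pose proof (Hp i Hi). nra. }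
  unfold D in Dt.
  intros sx sy sz. rewrite fTheta_half by assumption.
  assert (forall F, (forall i, (i < n)%nat -> F i = p i * Rabs (U a t i)) \/
                    (forall i, (i < n)%nat -> F i = p i * Rabs (W a t i)) -> fsum n F <= 2).
  { intros F [H|H].
    - unfold fsum in *. rewrite (lsum_ext _ F (fun i => p i * Rabs (U a t i))) by (intros; apply H; apply inseq; auto). lra.
    - unfold fsum in *. rewrite (lsum_ext _ F (fun i => p i * Rabs (W a t i))) by (intros; apply H; apply inseq; auto). lra. }
  enough (fsum n (fun i => p i * Rabs (dot3 (rotz t (vs sx sy sz)) (a i))) <= 2) by lra.
  apply H.
  destruct sx, sy; [left|right|right|left]; intros i Hi; f_equal;
    unfold dot3, rotz, vs, sgn, U, W, vx, vy, vz; simpl;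
    pose proof (Hpl i Hi) as Zi; unfold vz in Zi; rewrite Zi;
    first [f_equal; ring | rewrite <- Rabs_Ropp; f_equal; ring].
Qed.
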